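(* Assume $\nabla f$ is $L$-Lipschitz, and consider the SAM flow at a point where not all $g_k$ vanish. Then the Norm Deviation $Q$ satisfies $$\frac{dQ}{dt}=4\rho u K\cdot\mathrm{Cov}\big(\|\mathcal G_k\|_F^2,\|g_k\|_F^2\big)+R,$$ where there is a constant $C$ depending only on $\Phi$, $K$, $L$, the Frobenius norms of the current cores and $\|\nabla f(\mathcal T)\|_F$ (with $\mathcal T=\Phi(\mathcal G_1,\ldots,\mathcal G_K)$) such that $|R|\le C\rho^2$ for all $\rho\in(0,1]$.
   Context: Let $K\ge 2$. For each $k\in[K]$ let $V_k$ be a finite-dimensional real space of tensors with Frobenius inner product $\langle\cdot,\cdot\rangle_F$ and norm $\|\cdot\|_F$; $[K]=\{1,\ldots,K\}$. Let $\Phi:V_1\times\cdots\times V_K\to\mathbb R^{n_1\times\cdots\times n_d}$ be multilinear, $f:\mathbb R^{n_1\times\cdots\times n_d}\to\mathbb R$ continuously differentiable with $\|\nabla f(\mathcal X)-\nabla f(\mathcal Y)\|_F\le L\|\mathcal X-\mathcal Y\|_F$ for all $\mathcal X,\mathcal Y$, and $F:=f\circ\Phi$. SAM gradient flow with radius $\rho>0$: at a point $(\mathcal G_1,\ldots,\mathcal G_K)$ let $g_k=\nabla_{\mathcal G_k}F(\mathcal G_1,\ldots,\mathcal G_K)$, $u=(\sum_{j=1}^K\|g_j\|_F^2)^{-1/2}$ (requiring not all $g_j=0$), $\tilde{\mathcal G}_k=\mathcal G_k+\rho u g_k$, $\tilde g_k=\nabla_{\mathcal G_k}F(\tilde{\mathcal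 G}_1,\ldots,\tilde{\mathcal G}_K)$; the SAM flow is $\frac{d}{dt}\mathcal G_k=-\tilde g_k$ for all $k$, and time derivatives are along this flow. The Norm Deviation is $Q:=\sum_{k=1}^K\big(\|\mathcal G_k\|_F^2-\frac1K\sum_{i=1}^K\|\mathcal G_i\|_F^2\big)^2$. The empirical covariance is $\mathrm{Cov}(x_k,y_k):=\frac1K\sum_{k=1}^K(x_k-\bar x)(y_k-\bar y)$ with $\bar x,\bar y$ the means over $k\in[K]$. *)

(* Defs.v *)
From HB Require Import structures.
From mathcomp Require Import all_boot all_order all_algebra.
From mathcomp Require Import all_classical all_reals all_analysis.
Set Implicit Arguments. Unset Strict Implicit. Unset Printing Implicit Defensive.
Import Order.TTheory GRing.Theory Num.Theory.
Import numFieldNormedType.Exports.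
Local Open Scope ring_scope.

Section SAMDefs.
Variable R : realType.

(* Frobenius inner product and norm on a (flattened) tensor space R^n. *)
Definition frob_dot (m : nat) (x y : 'rV[R]_m) : R := \sum_(j < m) x 0 j * y 0 j.
Definition frob (m : nat) (x : 'rV[R]_m) : R := Num.sqrt (frob_dot x x).

Definition cores (K : nat) (n : 'I_K -> nat) := forall k : 'I_K, 'rV[R]_(n k).

Definition upd (K : nat) (n : 'I_K -> nat) (G : cores n) (k : 'I_K) (x : 'rV[R]_(n k))
  : cores n := @dfwith _ (fun i : 'I_K => 'rV[R]_(n i)) G k x.

Definition multilinear (K N : nat) (n : 'I_K -> nat) (Phi : cores n -> 'rV[R]_N) :=
  forall (G : cores n) (k : 'I_K) (a : R) (x y : 'rV[R]_(n k)),
    Phi (upd G (a *: x + y)) = a *: Phi (upd G x) + Phi (upd G y).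

Definition grad (N : nat) (f : 'rV[R]_N -> R) (X : 'rV[R]_N) : 'rV[R]_N :=
  \row_(i < N) derive1 (fun s : R => f (X + s *: delta_mx 0 i)) 0.

Definition C1 (N : nat) (f : 'rV[R]_N -> R) :=
  (forall X, differentiable f X) /\ continuous (grad f).

Definition grad_lipschitz (N : nat) (f : 'rV[R]_N -> R) (L : R) :=
  forall X Y, frob (grad f X - grad f Y) <= L * frob (X - Y).

Section Flow.
Variables (K N : nat) (n : 'I_K -> nat) (Phi : cores n -> 'rV[R]_N) (f : 'rV[R]_N -> R).

Definition Fobj (G : cores n) : R := f (Phi G).

Definition pgrad (G : cores n) (k : 'I_K) : 'rV[R]_(n k) :=
  \row_(j < n k) derive1 (fun s : R => Fobj (upd G (G k + s *: delta_mx 0 j))) 0.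

Definition sam_u (G : cores n) : R :=
  (Num.sqrt (\sum_(j < K) frob (pgrad G j) ^+ 2))^-1.

Definition sam_perturb (rho : R) (G : cores n) : cores n :=
  fun k => G k + (rho * sam_u G) *: pgrad G k.

Definition sam_vel (rho : R) (G : cores n) : cores n :=
  fun k => - pgrad (sam_perturb rho G) k.

Definition normdev (G : cores n) : R :=
  \sum_(k < K) (frob (G k) ^+ 2 - K%:R^-1 * \sum_(i < K) frob (G i) ^+ 2) ^+ 2.

Definition dQdt (rho : R) (G : cores n) : R :=
  derive1 (fun t : R => normdev (fun k => G k + t *: sam_vel rho G k)) 0.

End Flow.

Definition cov (K : nat) (x y : 'I_K -> R) : R :=
  K%:R^-1 * \sum_(k < K) (x k - K%:R^-1 * \sum_(i < K) x i)
                          * (y k - K%:R^-1 * \sum_(i < K) y i).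

End SAMDefs.

(* Main.v *)
Require Import Defs.
From HB Require Import structures.
From mathcomp Require Import all_boot all_order all_algebra.
From mathcomp Require Import all_classical all_reals all_analysis.
From mathcomp Require Import ring lra.
Import Order.TTheory GRing.Theory Num.Theory.
Import numFieldNormedType.Exports.
Set Implicit Arguments. Unset Strict Implicit. Unset Printing Implicit Defensive.
Local Open Scope ring_scope.

Section Basic.
Variable R : realType.

Lemma is_derive_sq2 (A B C : R) :
  is_derive (0:R) (1:R) (fun t : R => (A + B * t + C * t ^+ 2) ^+ 2) (2 * A * B).
Proof.
have -> : (fun t : R => (A + B * t + C * t ^+ 2) ^+ 2) = ((cst A + B \*o id + C \*o (id ^+ 2)) ^+ 2).
  by apply: funext => t /=.
apply: is_derive_eq.
change ((2%:R * (A + B*0 + C*(0 * 0)) ^+ 1) * (0 + B * 1 + C * ((2%:R * 0 ^+ 1) * 1)) = 2*A*B).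
ring.
Qed.

Lemma derive1_sumsq (m : nat) (A B C : 'I_m -> R) :
  derive1 (fun t : R => \sum_(k < m) (A k + B k * t + C k * t ^+ 2) ^+ 2) 0
  = \sum_(k < m) 2 * A k * B k.
Proof.
rewrite derive1E.
have -> : (fun t : R => \sum_(k < m) (A k + B k * t + C k * t ^+ 2) ^+ 2) =
   \sum_(k < m) (fun t : R => (A k + B k * t + C k * t ^+ 2) ^+ 2).
  by rewrite fct_sumE.
have H := is_derive_sum (fun i => is_derive_sq2 (A i) (B i) (C i)).
by rewrite derive_val.
Qed.

Lemma dirder (N : nat) (f : 'rV[R]_N -> R) (X v : 'rV[R]_N) :
  differentiable f X -> derive1 (fun s : R => f (X + s *: v)) 0 = 'd f X v.
Proof.
move=> df; rewrite -deriveE // derive1E /derive.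
rewrite scale0r addr0; f_equal; f_equal; apply: funext => h /=.
by rewrite addr0 [h%:A]mulr1 [X + _]addrC.
Qed.

Lemma grad_dot (N : nat) (f : 'rV[R]_N -> R) (X v : 'rV[R]_N) :
  differentiable f X -> derive1 (fun s : R => f (X + s *: v)) 0 = frob_dot (grad f X) v.
Proof.
move=> df; rewrite dirder // {1}(row_sum_delta v) linear_sum /frob_dot.
apply: eq_bigr => j _; rewrite linearZ /= mxE dirder // mulrC.
by [].
Qed.


Lemma frob_dotC m (x y : 'rV[R]_m) : frob_dot x y = frob_dot y x.
Proof. by apply: eq_bigr => j _; rewrite mulrC. Qed.

Lemma frob_dotDl m (x y z : 'rV[R]_m) : frob_dot (x + y) z = frob_dot x z + frob_dot y z.
Proof. by rewrite /frob_dot -big_split; apply: eq_bigr => j _; rewrite mxE mulrDl. Qed.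

Lemma frob_dotDr m (x y z : 'rV[R]_m) : frob_dot z (x + y) = frob_dot z x + frob_dot z y.
Proof. by rewrite frob_dotC frob_dotDl !(frob_dotC z). Qed.

Lemma frob_dotZl m a (x y : 'rV[R]_m) : frob_dot (a *: x) y = a * frob_dot x y.
Proof. by rewrite /frob_dot mulr_sumr; apply: eq_bigr => j _; rewrite mxE mulrA. Qed.

Lemma frob_dotZr m a (x y : 'rV[R]_m) : frob_dot y (a *: x) = a * frob_dot y x.
Proof. by rewrite frob_dotC frob_dotZl frob_dotC. Qed.

Lemma frob_dotNl m (x y : 'rV[R]_m) : frob_dot (- x) y = - frob_dot x y.
Proof. by rewrite -scaleN1r frob_dotZl mulN1r. Qed.

Lemma frob_dotNr m (x y : 'rV[R]_m) : frob_dot y (- x) = - frob_dot y x.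
Proof. by rewrite frob_dotC frob_dotNl frob_dotC. Qed.

Lemma frob_dotBl m (x y z : 'rV[R]_m) : frob_dot (x - y) z = frob_dot x z - frob_dot y z.
Proof. by rewrite frob_dotDl frob_dotNl. Qed.

Lemma frob_dotBr m (x y z : 'rV[R]_m) : frob_dot z (x - y) = frob_dot z x - frob_dot z y.
Proof. by rewrite frob_dotDr frob_dotNr. Qed.

Lemma frob_dot_sumr m p (c : 'I_p -> R) (y : 'I_p -> 'rV[R]_m) x :
  frob_dot x (\sum_(j < p) c j *: y j) = \sum_(j < p) c j * frob_dot x (y j).
Proof.
elim/big_rec2: _; first by rewrite /frob_dot big1 // => j _; rewrite mxE mulr0.
by move=> j a b _ <-; rewrite frob_dotDr frob_dotZr.
Qed.

Lemma frob_dot_ge0 m (x : 'rV[R]_m) : 0 <= frob_dot x x.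
Proof. by apply: sumr_ge0 => j _; rewrite -expr2 sqr_ge0. Qed.

Lemma frob_ge0 m (x : 'rV[R]_m) : 0 <= frob x.
Proof. exact: sqrtr_ge0. Qed.

Lemma frob_sq m (x : 'rV[R]_m) : frob x ^+ 2 = frob_dot x x.
Proof. by rewrite /frob sqr_sqrtr // frob_dot_ge0. Qed.

Definition n1 m (x : 'rV[R]_m) : R := \sum_(j < m) `|x 0 j|.

Lemma n1_ge0 m (x : 'rV[R]_m) : 0 <= n1 x.
Proof. by apply: sumr_ge0 => j _. Qed.

Lemma le_sum_term (I : finType) (F : I -> R) i : (forall j, 0 <= F j) -> F i <= \sum_j F j.
Proof.
move=> F0; rewrite (bigD1 i) //= lerDl; apply: sumr_ge0 => j _; exact: F0.
Qed.

Lemma abs_le_frob m (x : 'rV[R]_m) j : `|x 0 j| <= frob x.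
Proof.
rewrite -sqrtr_sqr /frob ler_sqrt ?frob_dot_ge0 // /frob_dot.
apply: le_trans (@le_sum_term _ (fun j => x 0 j * x 0 j) j _); first by rewrite expr2.
by move=> i; rewrite -expr2 sqr_ge0.
Qed.

Lemma dot_le m (x y : 'rV[R]_m) : `|frob_dot x y| <= frob x * n1 y.
Proof.
rewrite /frob_dot /n1 mulr_sumr; apply: (le_trans (ler_norm_sum _ _ _)).
apply: ler_sum => j _; rewrite normrM ler_wpM2r //; exact: abs_le_frob.
Qed.

Lemma n1_le m (x : 'rV[R]_m) : n1 x <= m%:R * frob x.
Proof.
rewrite /n1 mulr_natl -[m in _ *+ m]card_ord -sumr_const; apply: ler_sum => j _; exact: abs_le_frob.
Qed.

Lemma sumsq_le (I : finType) (F : I -> R) : (forall j, 0 <= F j) ->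
  \sum_j F j ^+ 2 <= (\sum_j F j) ^+ 2.
Proof.
move=> F0; rewrite expr2 mulr_suml; apply: ler_sum => i _.
by rewrite expr2 ler_wpM2l // le_sum_term.
Qed.

Lemma frob_le_n1 m (x : 'rV[R]_m) : frob x <= n1 x.
Proof.
rewrite /frob -(ger0_norm (n1_ge0 x)) -sqrtr_sqr ler_sqrt ?sqr_ge0 //.
rewrite /frob_dot /n1 (le_trans _ (sumsq_le _)) //.
by apply: ler_sum => j _; rewrite -expr2 -normrX ger0_norm // sqr_ge0.
Qed.

Lemma n1D m (x y : 'rV[R]_m) : n1 (x + y) <= n1 x + n1 y.
Proof. by rewrite /n1 -big_split; apply: ler_sum => j _; rewrite mxE ler_normD. Qed.

Lemma n1Z m a (x : 'rV[R]_m) : n1 (a *: x) = `|a| * n1 x.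
Proof. by rewrite /n1 mulr_sumr; apply: eq_bigr => j _; rewrite mxE normrM. Qed.

Lemma n1N m (x : 'rV[R]_m) : n1 (- x) = n1 x.
Proof. by rewrite -scaleN1r n1Z normrN normr1 mul1r. Qed.

Lemma n1_sum m p (y : 'I_p -> 'rV[R]_m) : n1 (\sum_(j < p) y j) <= \sum_(j < p) n1 (y j).
Proof.
elim/big_rec2: _; first by rewrite /n1 big1 // => j _; rewrite mxE normr0.
by move=> j a b _ h; apply: (le_trans (n1D _ _)); rewrite lerD2l.
Qed.

Lemma n1_delta m (j : 'I_m) : n1 (delta_mx 0 j : 'rV[R]_m) = 1.
Proof.
rewrite /n1 (bigD1 j) //= big1 ?addr0 => [|i /negbTE ij]; rewrite mxE.
  by rewrite !eqxx normr1.
by rewrite ij andbF normr0.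
Qed.


Lemma frob_eq0 m (x : 'rV[R]_m) : frob x = 0 -> x = 0.
Proof.
move=> /eqP; rewrite /frob sqrtr_eq0 => h.
have h0 : frob_dot x x = 0 by apply/eqP; rewrite eq_le h frob_dot_ge0.
apply/rowP => j; rewrite mxE.
have /psumr_eq0P h1 := h0.
have := h1 (fun i _ => @sqr_ge0 _ (x 0 i)) j isT.
by move/eqP; rewrite mulf_eq0 orbb => /eqP.
Qed.

End Basic.

Section ML.
Variable R : realType.
Variables (K N : nat) (n : 'I_K -> nat) (Phi : cores R n -> 'rV[R]_N).
Hypothesis ml : multilinear Phi.

Lemma upd_in (G : cores R n) k (x : 'rV_(n k)) : upd G x k = x.
Proof. exact: dfwith_in. Qed.

Lemma upd_out (G : cores R n) k (x : 'rV_(n k)) j : k != j -> upd G x j = G j.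
Proof. exact: dfwith_out. Qed.

Lemma upd_id (G : cores R n) k : upd G (G k) = G.
Proof.
apply: functional_extensionality_dep => j.
case: (eqVneq k j) => [<-|ne]; [exact: upd_in | exact: upd_out].
Qed.

Lemma Phi_upd0 (G : cores R n) k : Phi (@upd _ _ _ G k 0) = 0.
Proof.
have H := @ml G k 1 0 0.
rewrite !scale1r addr0 in H.
move: H => /(congr1 (fun z => z - Phi (@upd _ _ _ G k 0))) /=.
by rewrite subrr addrK.
Qed.

Lemma Phi_updD (G : cores R n) k (x y : 'rV_(n k)) :
  Phi (upd G (x + y)) = Phi (upd G x) + Phi (upd G y).
Proof. by have := @ml G k 1 x y; rewrite !scale1r. Qed.

Lemma Phi_updZ (G : cores R n) k a (x : 'rV_(n k)) :
  Phi (upd G (a *: x)) = a *: Phi (upd G x).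
Proof. by have := @ml G k a x 0; rewrite !addr0 Phi_upd0 addr0. Qed.

Lemma Phi_updB (G : cores R n) k (x y : 'rV_(n k)) :
  Phi (upd G (x - y)) = Phi (upd G x) - Phi (upd G y).
Proof. by rewrite -scaleN1r Phi_updD Phi_updZ scaleN1r. Qed.

Lemma Phi_upd_sum (G : cores R n) k m (c : 'I_m -> R) (x : 'I_m -> 'rV_(n k)) :
  Phi (upd G (\sum_(j < m) c j *: x j)) = \sum_(j < m) c j *: Phi (upd G (x j)).
Proof.
elim/big_rec2: _; first exact: Phi_upd0.
by move=> j y z _ <-; rewrite Phi_updD Phi_updZ.
Qed.

Lemma Phi_upd_line (G : cores R n) k (e : 'rV_(n k)) (s : R) :
  Phi (upd G (G k + s *: e)) = Phi G + s *: Phi (upd G e).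
Proof. by have := @ml G k s e (G k); rewrite upd_id addrC => ->; rewrite addrC. Qed.


Lemma pgradE (f : 'rV[R]_N -> R) (G : cores R n) k : differentiable f (Phi G) ->
  pgrad Phi f G k = \row_(j < n k) frob_dot (grad f (Phi G)) (Phi (upd G (delta_mx 0 j))).
Proof.
move=> df; apply/rowP => j; rewrite !mxE /Fobj.
have -> : (fun s : R => f (Phi (upd G (G k + s *: delta_mx 0 j)))) =
          (fun s => f (Phi G + s *: Phi (upd G (delta_mx 0 j)))).
  by apply: funext => s; rewrite Phi_upd_line.
exact: grad_dot.
Qed.

Lemma euler (f : 'rV[R]_N -> R) (G : cores R n) k (v : 'rV_(n k)) :
  differentiable f (Phi G) ->
  frob_dot v (pgrad Phi f G k) = frob_dot (grad f (Phi G)) (Phi (upd G v)).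
Proof.
move=> df; rewrite pgradE // {2}(row_sum_delta v) Phi_upd_sum.
rewrite frob_dot_sumr {1}/frob_dot; apply: eq_bigr => j _; rewrite mxE.
by [].
Qed.


Definition basis_t (j : {dffun forall k : 'I_K, 'I_(n k)}) : cores R n :=
  fun k => (delta_mx 0 (j k) : 'rV[R]_(n k)).

Definition Mb : R := \sum_(j : {dffun forall k : 'I_K, 'I_(n k)}) n1 (Phi (basis_t j)).

Lemma Mb_ge0 : 0 <= Mb.
Proof. by apply: sumr_ge0 => j _; exact: n1_ge0. Qed.

Lemma prod_upd (H : cores R n) k0 (x : 'rV_(n k0)) :
  \prod_k n1 (upd H x k) = n1 x * \prod_(k | k != k0) n1 (H k).
Proof.
rewrite (bigD1 k0) //= upd_in; congr (_ * _); apply: eq_bigr => k nk.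
by rewrite upd_out // eq_sym.
Qed.

Lemma BL_aux m : forall H : cores R n,
  (forall k : 'I_K, (m <= k)%N -> exists j, H k = delta_mx 0 j) ->
  n1 (Phi H) <= Mb * \prod_k n1 (H k).
Proof.
elim: m => [|m IH] H hH.
  have [u hu] := fin_all_exists (fun k => hH k (leq0n _)).
  pose jj : {dffun forall k : 'I_K, 'I_(n k)} := [ffun k => u k].
  have -> : H = basis_t jj.
    by apply: functional_extensionality_dep => k; rewrite /basis_t ffunE hu.
  rewrite big1 ?mulr1; last by move=> k _; rewrite /basis_t n1_delta.
  by apply: (@le_sum_term _ _ (fun j => n1 (Phi (basis_t j))) jj) => j; exact: n1_ge0.
case: (ltnP m K) => [mK|Km]; last first.
  apply: IH => k hk; exfalso; move: (ltn_ord k); rewrite ltnNge.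
  by rewrite (leq_trans Km hk).
pose k0 := Ordinal mK.
rewrite -(upd_id H k0) {1}(row_sum_delta (H k0)) Phi_upd_sum.
apply: (le_trans (n1_sum _)).
have IH' : forall j, n1 (Phi (upd H (delta_mx 0 j : 'rV_(n k0)))) <=
                     Mb * \prod_(k | k != k0) n1 (H k).
  move=> j; apply: le_trans (IH _ _) _.
    move=> k hk; case: (eqVneq k0 k) => [<-|ne]; first by exists j; rewrite upd_in.
    rewrite upd_out //; apply: hH; rewrite ltn_neqAle hk andbT.
    by apply: contra ne => /eqP e; apply/eqP/val_inj.
  by rewrite prod_upd n1_delta mul1r.
rewrite prod_upd [n1 (H k0)]/n1.
rewrite (mulrCA Mb) mulr_suml.
apply: ler_sum => j _.
rewrite n1Z; apply: ler_wpM2l; first exact: normr_ge0.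
exact: IH'.
Qed.

Lemma BL (H : cores R n) : n1 (Phi H) <= Mb * \prod_k n1 (H k).
Proof. apply: (@BL_aux K) => k hk; exfalso; move: (ltn_ord k); by rewrite ltnNge hk. Qed.


Lemma prod_le_pow (F : 'I_K -> R) B : (forall k, 0 <= F k <= B) -> \prod_k F k <= B ^+ K.
Proof.
move=> hF; apply: (@le_trans _ _ (\prod_(k < K) B)); first by apply: ler_prod => k _; exact: hF.
by rewrite prodr_const card_ord.
Qed.

Lemma prod_ne_le (F : 'I_K -> R) B k0 : 1 <= B -> (forall k, 0 <= F k <= B) ->
  \prod_(k | k != k0) F k <= B ^+ K.
Proof.
move=> B1 hF; apply: (@le_trans _ _ (\prod_(k < K | k != k0) B)); first by apply: ler_prod => k _; exact: hF.
have -> : B ^+ K = \prod_(k < K) B by rewrite prodr_const card_ord.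
rewrite [X in _ <= X](bigD1 k0) //=.
by rewrite ler_peMl // ?prodr_ge0 // => k _; apply: le_trans B1.
Qed.

Lemma BL_upd (H : cores R n) k0 (x : 'rV_(n k0)) B : 1 <= B ->
  (forall k, n1 (H k) <= B) -> n1 (Phi (upd H x)) <= Mb * (n1 x * B ^+ K).
Proof.
move=> B1 hB; apply: le_trans (BL _) _; rewrite prod_upd ler_wpM2l ?Mb_ge0 //.
by rewrite ler_wpM2l ?n1_ge0 // prod_ne_le // => k; rewrite n1_ge0 hB.
Qed.

Lemma BLb (H : cores R n) B : (forall k, 0 <= n1 (H k) <= B) -> n1 (Phi H) <= Mb * B ^+ K.
Proof. by move=> hB; apply: le_trans (BL _) _; rewrite ler_wpM2l ?Mb_ge0 // prod_le_pow. Qed.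

Definition mix (H H' : cores R n) (m : nat) : cores R n :=
  fun k => if (k < m)%N then H' k else H k.

Lemma LL (H H' : cores R n) B d : 1 <= B ->
  (forall k, n1 (H k) <= B) -> (forall k, n1 (H' k) <= B) ->
  (forall k, n1 (H' k - H k) <= d) ->
  n1 (Phi H' - Phi H) <= Mb * B ^+ K * (K%:R * d).
Proof.
move=> B1 hB hB' hd.
have mixB m k : n1 (mix H H' m k) <= B by rewrite /mix; case: ifP.
suff: forall m, (m <= K)%N -> n1 (Phi (mix H H' m) - Phi H) <= Mb * B ^+ K * (m%:R * d).
  move/(_ K (leqnn K)); congr (n1 (_ - _) <= _); congr Phi.
  by apply: functional_extensionality_dep => k; rewrite /mix ltn_ord.
elim=> [|m IH] hm.
  have -> : mix H H' 0 = H by apply: functional_extensionality_dep => k.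
  by rewrite subrr mul0r mulr0 /n1 big1 // => j _; rewrite mxE normr0.
have mK : (m < K)%N by [].
pose k0 := Ordinal mK.
have e1 : mix H H' m.+1 = upd (mix H H' m) (H' k0).
  apply: functional_extensionality_dep => k; case: (eqVneq k0 k) => [<-|ne].
    by rewrite upd_in /mix /= ltnSn.
  rewrite upd_out // /mix ltnS leq_eqVlt.
  have -> : (val k == m) = false.
    by apply/negbTE; apply: contra ne => /eqP e; apply/eqP/val_inj.
  by [].
have e0 : mix H H' m = upd (mix H H' m) (H k0).
  by rewrite -{1}(upd_id (mix H H' m) k0) /mix /= ltnn.
rewrite e1 -(subrKA (Phi (upd (mix H H' m) (H k0)))) -Phi_updB -e0.
apply: (le_trans (n1D _ _)).
have d0 : 0 <= d by apply: le_trans (hd k0); exact: n1_ge0.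
rewrite -nat1r mulrDl mul1r mulrDr lerD ?IH ?(ltnW hm) //.
apply: le_trans (BL_upd _ B1 (mixB m)) _.
by rewrite -mulrA ler_wpM2l ?Mb_ge0 // mulrC ler_wpM2l ?exprn_ge0 ?(le_trans _ B1) //.
Qed.


Lemma sumA0 (x : 'I_K -> R) : (0 < K)%N -> \sum_k (x k - K%:R^-1 * \sum_i x i) = 0.
Proof.
move=> K0; rewrite sumrB sumr_const card_ord -mulrnAl -mulr_natr mulVf ?mul1r ?subrr //.
by rewrite pnatr_eq0 -lt0n.
Qed.

Lemma sumA0M (x c : 'I_K -> R) : (0 < K)%N ->
  \sum_k (x k - K%:R^-1 * \sum_i x i) * (c k) =
  \sum_k (x k - K%:R^-1 * \sum_i x i) * (c k - K%:R^-1 * \sum_i c i).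
Proof.
move=> K0; apply/eqP; rewrite -subr_eq0 -sumrB.
rewrite (eq_bigr (fun k => (x k - K%:R^-1 * \sum_i x i) * (K%:R^-1 * \sum_i c i))).
  by rewrite -mulr_suml sumA0 // mul0r.
by move=> k _; ring.
Qed.

Lemma dnormdev (G V : cores R n) : (0 < K)%N ->
  derive1 (fun t : R => normdev (fun k => G k + t *: V k)) 0 =
  4 * \sum_k (frob (G k) ^+ 2 - K%:R^-1 * \sum_i frob (G i) ^+ 2) * frob_dot (G k) (V k).
Proof.
move=> K0.
pose al k := frob (G k) ^+ 2; pose be k := frob_dot (G k) (V k);
pose ga k := frob_dot (V k) (V k).
have hs t k : frob (G k + t *: V k) ^+ 2 = al k + 2 * be k * t + ga k * t ^+ 2.
  rewrite /al /be /ga !frob_sq frob_dotDl !frob_dotDr !frob_dotZl !frob_dotZr.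
  rewrite (frob_dotC (V k) (G k)); ring.
have hsum t : \sum_i (al i + 2 * be i * t + ga i * t ^+ 2) =
   \sum_i al i + (\sum_i 2 * be i) * t + (\sum_i ga i) * t ^+ 2.
  by rewrite !big_split /= !mulr_suml.
have -> : (fun t : R => normdev (fun k => G k + t *: V k)) =
  (fun t => \sum_(k < K) ((al k - K%:R^-1 * \sum_i al i)
      + (2 * be k - K%:R^-1 * \sum_i 2 * be i) * t
      + (ga k - K%:R^-1 * \sum_i ga i) * t ^+ 2) ^+ 2).
  apply: funext => t; rewrite /normdev; apply: eq_bigr => k _.
  rewrite hs (eq_bigr _ (fun i _ => hs t i)) hsum; congr (_ ^+ 2); ring.
rewrite derive1_sumsq mulr_sumr; apply: etrans (_ : \sum_k (4 * ((al k - K%:R^-1 * \sum_i al i) * be k) -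
   (al k - K%:R^-1 * \sum_i al i) * (2 * (K%:R^-1 * \sum_i 2 * be i))) = _).
  by apply: eq_bigr => k _; ring.
rewrite sumrB -mulr_suml sumA0 // mul0r subr0.
by [].
Qed.


Lemma upd_n1_le (X : cores R n) k (x : 'rV_(n k)) B : n1 x <= B ->
  (forall i, n1 (X i) <= B) -> forall i, n1 (upd X x i) <= B.
Proof.
move=> hx hX i; case: (eqVneq k i) => [<-|ne]; first by rewrite upd_in.
by rewrite upd_out.
Qed.

Lemma upd_diff_le (X Y : cores R n) k (x : 'rV_(n k)) d : 0 <= d ->
  (forall i, n1 (Y i - X i) <= d) -> forall i, n1 (upd Y x i - upd X x i) <= d.
Proof.
move=> d0 hd i; case: (eqVneq k i) => [<-|ne]; last by rewrite !upd_out.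
by rewrite !upd_in subrr /n1 big1 // => j _; rewrite mxE normr0.
Qed.

Lemma delta_bound (f : 'rV[R]_N -> R) (G Gt : cores R n) k j B d Lb bb :
  (forall X, differentiable f X) -> 1 <= B ->
  (forall i, n1 (G i) <= B) -> (forall i, n1 (Gt i) <= B) ->
  (forall i, n1 (Gt i - G i) <= d) -> 0 <= d ->
  (forall X Y, frob (grad f X - grad f Y) <= Lb * frob (X - Y)) -> 0 <= Lb ->
  frob (grad f (Phi G)) <= bb ->
  `|(pgrad Phi f Gt k - pgrad Phi f G k) 0 j| <=
    d * (Mb * B ^+ K * K%:R) * (Lb * (Mb * B ^+ K) + bb).
Proof.
move=> df B1 hG hGt hd d0 hL Lb0 hb.
rewrite mxE !pgradE // !mxE.
set w1 := Phi (upd Gt _); set w0 := Phi (upd G _).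
set D1 := grad f (Phi Gt); set D0 := grad f (Phi G).
have -> : frob_dot D1 w1 - frob_dot D0 w0 = frob_dot (D1 - D0) w1 + frob_dot D0 (w1 - w0).
  by rewrite frob_dotBl frob_dotBr; ring.
have ej : n1 (delta_mx 0 j : 'rV[R]_(n k)) <= B by rewrite n1_delta.
have hw1 : n1 w1 <= Mb * B ^+ K.
  apply: le_trans (BL_upd _ B1 hGt) _; by rewrite n1_delta mul1r.
have hw : n1 (w1 - w0) <= Mb * B ^+ K * (K%:R * d).
  apply: LL => //; [exact: upd_n1_le | exact: upd_n1_le | exact: upd_diff_le].
have hP : frob (Phi Gt - Phi G) <= Mb * B ^+ K * (K%:R * d).
  by apply: le_trans (frob_le_n1 _) _; apply: LL.
have hM0 : 0 <= Mb * B ^+ K by rewrite mulr_ge0 ?Mb_ge0 // exprn_ge0 // (le_trans _ B1).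
have b0 : 0 <= bb by apply: le_trans hb; exact: frob_ge0.
apply: (le_trans (ler_normD _ _)).
apply: le_trans (lerD (dot_le _ _) (dot_le _ _)) _.
have h1 : frob (D1 - D0) * n1 w1 <= (Lb * (Mb * B ^+ K * (K%:R * d))) * (Mb * B ^+ K).
  apply: ler_pM => //; [exact: frob_ge0 | exact: n1_ge0 |].
  by apply: le_trans (hL _ _) _; rewrite ler_wpM2l.
have h2 : frob D0 * n1 (w1 - w0) <= bb * (Mb * B ^+ K * (K%:R * d)).
  by apply: ler_pM => //; [exact: frob_ge0 | exact: n1_ge0].
apply: le_trans (lerD h1 h2) _.
by rewrite le_eqVlt; apply/orP; left; apply/eqP; ring.
Qed.

End ML.

Unset Implicit Arguments.

Theorem theorem3 (R : realType) (K N : nat) (n : 'I_K -> nat)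
    (Phi : cores R n -> 'rV[R]_N) (L : R) :
  (2 <= K)%N -> multilinear Phi ->
  forall (a : 'I_K -> R) (b : R),
  exists C : R,
    forall (f : 'rV[R]_N -> R) (G : cores R n),
      C1 f -> grad_lipschitz f L ->
      (forall k, frob (G k) = a k) ->
      frob (grad f (Phi G)) = b ->
      (exists k, pgrad Phi f G k != 0) ->
      forall rho : R, 0 < rho <= 1 ->
        `| dQdt Phi f rho G
           - 4 * rho * sam_u Phi f G * K%:R
               * cov (fun k => frob (G k) ^+ 2) (fun k => frob (pgrad Phi f G k) ^+ 2) |
        <= C * rho ^+ 2.
Proof.
move=> K2 ml a b.
have K0 : (0 < K)%N by apply: leq_trans K2.
pose Ns : R := \sum_k (n k)%:R + 1.
pose B : R := 1 + \sum_k (n k)%:R * (`|a k| + 1).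
pose Aa : R := 2 * \sum_k a k ^+ 2.
pose E : R := Ns * (Mb Phi * B ^+ K * K%:R) * (`|L| * (Mb Phi * B ^+ K) + `|b|).
exists (4 * K%:R * Aa * Ns * E).
move=> f G [df _] hL hG hb [k1 hk1] rho /andP [rho0 rho1].
set g := pgrad Phi f G.
set Gt := sam_perturb Phi f rho G.
set gt := pgrad Phi f Gt.
set u := sam_u Phi f G.
set S := \sum_(j < K) frob (g j) ^+ 2.
have hS : 0 < S.
  apply: lt_le_trans (@le_sum_term _ _ (fun j => frob (g j) ^+ 2) k1 _); last first.
    by move=> j; exact: sqr_ge0.
  rewrite exprn_gt0 // lt_neqAle frob_ge0 andbT eq_sym.
  by apply: contra hk1 => /eqP h; apply/eqP; exact: frob_eq0.
have u0 : 0 <= u by rewrite /u /sam_u invr_ge0 sqrtr_ge0.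
have hug k : u * frob (g k) <= 1.
  have h : frob (g k) <= Num.sqrt S.
    rewrite -(ger0_norm (frob_ge0 (g k))) -sqrtr_sqr ler_sqrt; last exact: ltW.
    by apply: (@le_sum_term _ _ (fun j => frob (g j) ^+ 2)) => j; exact: sqr_ge0.
  apply: le_trans (ler_wpM2l u0 h) _.
  by rewrite /u /sam_u -/S mulVf // gt_eqF // sqrtr_gt0.
have nk0 k : 0 <= (n k)%:R :> R by [].
have hn k : (n k)%:R <= Ns.
  apply: le_trans (@le_sum_term _ _ (fun k => (n k)%:R) k _) _ => //.
  by rewrite /Ns lerDl.
have hterm k : (n k)%:R * (`|a k| + 1) <= B.
  apply: le_trans (@le_sum_term _ _ (fun k => (n k)%:R * (`|a k| + 1)) k _) _.
    by move=> i; rewrite mulr_ge0 // addr_ge0.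
  by rewrite /B lerDr.
have B1 : 1 <= B.
  by rewrite /B lerDl sumr_ge0 // => i _; rewrite mulr_ge0 // addr_ge0.
have hGa k : n1 (G k) <= (n k)%:R * `|a k|.
  by apply: le_trans (n1_le _) _; rewrite hG ler_wpM2l // ler_norm.
have hGB k : n1 (G k) <= B.
  apply: le_trans (hGa k) (le_trans _ (hterm k)).
  by rewrite ler_wpM2l // lerDl.
have hdiff k : Gt k - G k = (rho * u) *: g k.
  by rewrite /Gt /sam_perturb -/g -/u addrAC subrr add0r.
have hGd' k : n1 (Gt k - G k) <= rho * (n k)%:R.
  rewrite hdiff n1Z ger0_norm ?mulr_ge0 ?(ltW rho0) //.
  apply: le_trans (ler_wpM2l _ (n1_le _)) _; first by rewrite mulr_ge0 // ltW.
  have -> : rho * u * ((n k)%:R * frob (g k)) = rho * ((n k)%:R * (u * frob (g k))) by ring.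
  by rewrite ler_wpM2l ?(ltW rho0) // ler_piMr.
have hGd k : n1 (Gt k - G k) <= rho * Ns.
  by apply: le_trans (hGd' k) _; rewrite ler_wpM2l ?(ltW rho0).
have hGtB k : n1 (Gt k) <= B.
  have -> : Gt k = G k + (Gt k - G k) by rewrite addrC subrK.
  apply: le_trans (n1D _ _) (le_trans _ (hterm k)).
  have h1 := hGa k; have h2 := hGd' k.
  have h3 : rho * (n k)%:R <= (n k)%:R by rewrite ler_piMl.
  rewrite mulrDr mulr1; lra.
pose A k := frob (G k) ^+ 2 - K%:R^-1 * \sum_i frob (G i) ^+ 2.
pose c := frob_dot (grad f (Phi Gt)) (Phi Gt).
have hc k : frob_dot (G k) (sam_vel Phi f rho G k) =
    rho * u * frob_dot (g k) (gt k) - c.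
  rewrite /sam_vel -/Gt -/gt frob_dotNr.
  have -> : G k = Gt k - (rho * u) *: g k by rewrite -hdiff opprB addrC subrK.
  rewrite frob_dotBl frob_dotZl (euler ml) // upd_id /c; ring.
have hT1 : \sum_k A k * frob_dot (G k) (sam_vel Phi f rho G k) =
    rho * u * \sum_k A k * frob_dot (g k) (gt k).
  under eq_bigr => k _ do rewrite hc mulrBr.
  rewrite sumrB -mulr_suml sumA0 // mul0r subr0 mulr_sumr.
  by apply: eq_bigr => k _; ring.
have hT2 : K%:R * cov (fun k => frob (G k) ^+ 2) (fun k => frob (g k) ^+ 2) =
    \sum_k A k * frob (g k) ^+ 2.
  rewrite /cov mulrA mulfV ?mul1r ?pnatr_eq0 -?lt0n //.
  by rewrite -sumA0M.
have hT3 : \sum_k A k * frob_dot (g k) (gt k - g k) =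
    \sum_k A k * frob_dot (g k) (gt k) - \sum_k A k * frob (g k) ^+ 2.
  by rewrite -sumrB; apply: eq_bigr => k _; rewrite frob_dotBr frob_sq mulrBr.
have key : dQdt Phi f rho G - 4 * rho * u * K%:R *
    cov (fun k => frob (G k) ^+ 2) (fun k => frob (g k) ^+ 2) =
    4 * (rho * u) * \sum_k A k * frob_dot (g k) (gt k - g k).
  rewrite /dQdt dnormdev // -/A hT1 hT3.
  have -> : 4 * rho * u * K%:R * cov (fun k => frob (G k) ^+ 2) (fun k => frob (g k) ^+ 2)
     = 4 * (rho * u) * (K%:R * cov (fun k => frob (G k) ^+ 2) (fun k => frob (g k) ^+ 2)) by ring.
  rewrite hT2; ring.
rewrite key.
have hx : \sum_i frob (G i) ^+ 2 = \sum_i a i ^+ 2 by apply: eq_bigr => i _; rewrite hG.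
have s0 : 0 <= \sum_i a i ^+ 2 by apply: sumr_ge0 => i _; exact: sqr_ge0.
have hA k : `|A k| <= Aa.
  have h1 : frob (G k) ^+ 2 <= \sum_i a i ^+ 2.
    by rewrite -hx; apply: (@le_sum_term _ _ (fun i => frob (G i) ^+ 2)) => i; exact: sqr_ge0.
  have hK1 : K%:R^-1 <= 1 :> R.
    by rewrite invf_le1 ?ltr0n // ler1n.
  have hK0 : 0 <= K%:R^-1 :> R by rewrite invr_ge0.
  have h2 : K%:R^-1 * \sum_i a i ^+ 2 <= \sum_i a i ^+ 2 by rewrite ler_piMl.
  have h3 : 0 <= K%:R^-1 * \sum_i a i ^+ 2 by rewrite mulr_ge0.
  have h4 : 0 <= frob (G k) ^+ 2 by exact: sqr_ge0.
  rewrite /A hx /Aa ler_norml; apply/andP; split; lra.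
have hM0 : 0 <= Mb Phi * B ^+ K by rewrite mulr_ge0 ?Mb_ge0 // exprn_ge0 // (le_trans _ B1).
have hNs : 0 <= Ns by rewrite /Ns addr_ge0 ?sumr_ge0.
have hE0 : 0 <= E.
  rewrite /E; apply: mulr_ge0; first by apply: mulr_ge0 => //; exact: mulr_ge0.
  by apply: addr_ge0 => //; exact: mulr_ge0.
have hL' : forall X Y, frob (grad f X - grad f Y) <= `|L| * frob (X - Y).
  by move=> X Y; apply: le_trans (hL X Y) _; rewrite ler_wpM2r ?frob_ge0 // ler_norm.
have hb' : frob (grad f (Phi G)) <= `|b| by rewrite hb ler_norm.
have hd0 : 0 <= rho * Ns by rewrite mulr_ge0 ?(ltW rho0).
have hdl k : n1 (gt k - g k) <= Ns * (rho * E).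
  apply: (@le_trans _ _ (\sum_(j < n k) rho * E)).
    apply: ler_sum => j _.
    apply: le_trans (delta_bound ml (k:=k) j df B1 hGB hGtB hGd hd0 hL' (normr_ge0 _) hb') _.
    by rewrite le_eqVlt; apply/orP; left; apply/eqP; rewrite /E; ring.
  rewrite sumr_const card_ord -mulr_natl ler_wpM2r // mulr_ge0 ?(ltW rho0) //.
have tb k : `|4 * (rho * u) * (A k * frob_dot (g k) (gt k - g k))| <= 4 * rho * Aa * (Ns * (rho * E)).
  have hX := dot_le (g k) (gt k - g k).
  have hX2 : u * `|frob_dot (g k) (gt k - g k)| <= Ns * (rho * E).
    apply: le_trans (ler_wpM2l u0 hX) _.
    rewrite (mulrA u) -[X in _ <= X]mul1r; apply: ler_pM.
    - by apply: mulr_ge0 => //; exact: frob_ge0.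
    - exact: n1_ge0.
    - exact: hug.
    - exact: hdl.
  rewrite normrM (ger0_norm (_ : 0 <= 4 * (rho * u))); last first.
    by apply: mulr_ge0 => //; apply: mulr_ge0 => //; exact: ltW.
  rewrite normrM.
  have -> : 4 * (rho * u) * (`|A k| * `|frob_dot (g k) (gt k - g k)|) =
     (4 * rho * `|A k|) * (u * `|frob_dot (g k) (gt k - g k)|) by ring.
  apply: ler_pM; rewrite ?mulr_ge0 ?(ltW rho0) //.
  by rewrite ler_wpM2l ?mulr_ge0 ?(ltW rho0).
rewrite mulr_sumr; apply: le_trans (ler_norm_sum _ _ _) _.
apply: (@le_trans _ _ (\sum_(k < K) 4 * rho * Aa * (Ns * (rho * E)))).
  by apply: ler_sum => k _; exact: tb.
rewrite sumr_const card_ord -mulr_natl.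
by rewrite le_eqVlt; apply/orP; left; apply/eqP; ring.
Qed.
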